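(* Let $r\ge 1$ and $K\ge 1$ be integers, $\beta_1,\beta_2>0$, $\alpha_2>0$ and $\theta_1,\theta_2>0$. Let $\zeta=(1,0,0)$, $\eta=(0,0,1)$, $v'=(0,1,0)$, and for $i=1,\dots,r$ let $k_i=2^{i-1}K\zeta$ and $k_i'=k_i+\eta$. Define \[ E_1(x,t)=-\frac{r^{-\beta_1-\beta_2}}{2}\sum_{\substack{i,j=1\\ i\ne j}}^r|k_i|^{\theta_1}|k_j'|^{\theta_2}e^{-(|k_i|^{2\alpha_2}+|k_j'|^{2\alpha_2})t}\sin((k_j'-k_i)\cdot x)\,v', \] \[ E_2(x,t)=-\frac{r^{-\beta_1-\beta_2}}{2}\sum_{i=1}^r\sum_{j=1}^r|k_i|^{\theta_1}|k_j'|^{\theta_2}e^{-(|k_i|^{2\alpha_2}+|k_j'|^{2\alpha_2})t}\sin((k_j'+k_i)\cdot x)\,v', \] and for $m=1,2$ \[ b_{1m}(x,t)=\int_0^t e^{-(t-\tau)(-\Delta)^{\alpha_2}}E_m(x,\tau)\,d\tau . \] Then for all $t>0$, \[ \|b_{11}(\cdot,t)\|_{L^\infty}+\|b_{12}(\cdot,t)\|_{L^\infty}\lesssim r^{-\beta_1-\beta_2}\,t^{1-\frac{\theta_1+\theta_2}{2\alpha_2}}, \] with implicit constant independent of $r$, $K$ and $t$.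
   Context: $e^{-t(-\Delta)^\alpha}$ is the fractional heat semigroup (Fourier multiplier $e^{-t|\xi|^{2\alpha}}$); in particular $e^{-t(-\Delta)^\alpha}\big(w\sin(k\cdot x)\big)=e^{-|k|^{2\alpha}t}w\sin(k\cdot x)$. *)

(* Defs.v *)
From Stdlib Require Import Reals Lra List.
From Coquelicot Require Import Coquelicot.
Open Scope R_scope.

Definition vec3 := (R * R * R)%type.
Definition v3 (a b c : R) : vec3 := (a, b, c).
Definition c1 (u : vec3) : R := fst (fst u).
Definition c2 (u : vec3) : R := snd (fst u).
Definition c3 (u : vec3) : R := snd u.
Definition vadd (u w : vec3) : vec3 := v3 (c1 u + c1 w) (c2 u + c2 w) (c3 u + c3 w).
Definition vsub (u w : vec3) : vec3 := v3 (c1 u - c1 w) (c2 u - c2 w) (c3 u - c3 w).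
Definition vscale (a : R) (u : vec3) : vec3 := v3 (a * c1 u) (a * c2 u) (a * c3 u).
Definition vzero : vec3 := v3 0 0 0.
Definition dot (u w : vec3) : R := c1 u * c1 w + c2 u * c2 w + c3 u * c3 w.
Definition norm3 (u : vec3) : R := sqrt (dot u u).

(* |q|^s, with the convention 0^s = 0 (only used for s > 0). *)
Definition npow (q : vec3) (s : R) : R :=
  if Req_EM_T (norm3 q) 0 then 0 else Rpower (norm3 q) s.

Definition zeta : vec3 := v3 1 0 0.
Definition eta : vec3 := v3 0 0 1.
Definition vprime : vec3 := v3 0 1 0.

Definition kk (K : nat) (i : nat) : vec3 := vscale (2 ^ (i - 1) * INR K) zeta.
Definition kk' (K : nat) (i : nat) : vec3 := vadd (kk K i) eta.

(* Vector-valued sine polynomials: a list of modes (c, q, w) representing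
   x |-> sum c * sin (q . x) * w. *)
Definition sinpoly := list (R * vec3 * vec3).
Definition eval_sinpoly (p : sinpoly) (x : vec3) : vec3 :=
  fold_right (fun m acc => vadd (vscale (fst (fst m) * sin (dot (snd (fst m)) x)) (snd m)) acc)
             vzero p.

(* The fractional heat semigroup e^{-t(-Delta)^alpha} acting on sine polynomials
   (Fourier multiplier e^{-t|xi|^{2 alpha}}):
   e^{-t(-Delta)^alpha}(w sin(q.x)) = e^{-|q|^{2 alpha} t} w sin(q.x). *)
Definition frac_heat (alpha t : R) (p : sinpoly) : sinpoly :=
  map (fun m => (exp (- (npow (snd (fst m)) (2 * alpha)) * t) * fst (fst m),
                 snd (fst m), snd m)) p.

Definition RInt3 (f : R -> vec3) (a b : R) : vec3 :=
  v3 (RInt (fun s => c1 (f s)) a b) (RInt (fun s => c2 (f s)) a b)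
     (RInt (fun s => c3 (f s)) a b).

Definition idx (r : nat) : list nat := seq 1 r.

Definition coefE (r K : nat) (b1 b2 a2 th1 th2 tau : R) (i j : nat) : R :=
  - (Rpower (INR r) (- b1 - b2) / 2) * npow (kk K i) th1 * npow (kk' K j) th2
  * exp (- (npow (kk K i) (2 * a2) + npow (kk' K j) (2 * a2)) * tau).

Definition E1 (r K : nat) (b1 b2 a2 th1 th2 tau : R) : sinpoly :=
  flat_map (fun i =>
    flat_map (fun j =>
      if Nat.eqb i j then nil
      else (coefE r K b1 b2 a2 th1 th2 tau i j, vsub (kk' K j) (kk K i), vprime) :: nil)
    (idx r)) (idx r).

Definition E2 (r K : nat) (b1 b2 a2 th1 th2 tau : R) : sinpoly :=
  flat_map (fun i =>
    map (fun j => (coefE r K b1 b2 a2 th1 th2 tau i j, vadd (kk' K j) (kk K i), vprime))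
    (idx r)) (idx r).

Definition duhamel (a2 : R) (E : R -> sinpoly) (x : vec3) (t : R) : vec3 :=
  RInt3 (fun tau => eval_sinpoly (frac_heat a2 (t - tau) (E tau)) x) 0 t.

Definition b11 (r K : nat) (b1 b2 a2 th1 th2 : R) (x : vec3) (t : R) : vec3 :=
  duhamel a2 (E1 r K b1 b2 a2 th1 th2) x t.
Definition b12 (r K : nat) (b1 b2 a2 th1 th2 : R) (x : vec3) (t : R) : vec3 :=
  duhamel a2 (E2 r K b1 b2 a2 th1 th2) x t.

(* Main.v *)
Require Import Defs.
From Stdlib Require Import Reals.
From Coquelicot Require Import Coquelicot.
From Stdlib Require Import Lra Lia List.
Open Scope R_scope.

Definition sumL {A} (f : A -> R) (l : list A) : R :=
  fold_right (fun a acc => f a + acc) 0 l.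

Lemma sumL_app {A} (f : A -> R) l1 l2 : sumL f (l1 ++ l2) = sumL f l1 + sumL f l2.
Proof. induction l1; simpl; [ring | rewrite IHl1; ring]. Qed.
Lemma sumL_map {A B} (f : B -> R) (g : A -> B) l : sumL f (map g l) = sumL (fun a => f (g a)) l.
Proof. induction l; simpl; [ring | rewrite IHl; ring]. Qed.
Lemma sumL_flat_map {A B} (f : B -> R) (g : A -> list B) l :
  sumL f (flat_map g l) = sumL (fun a => sumL f (g a)) l.
Proof. induction l; simpl; [ring | rewrite sumL_app, IHl; ring]. Qed.
Lemma sumL_ext {A} (f g : A -> R) l : (forall a, In a l -> f a = g a) -> sumL f l = sumL g l.
Proof. induction l; simpl; intros H; [ring|]. rewrite H, IHl; auto. Qed.
Lemma sumL_le {A} (f g : A -> R) l : (forall a, In a l -> f a <= g a) -> sumL f l <= sumL g l.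
Proof. induction l; simpl; intros H; [lra|]. pose proof (H a (or_introl eq_refl)).
  pose proof (IHl (fun b hb => H b (or_intror hb))). lra. Qed.
Lemma sumL_abs {A} (f : A -> R) l : Rabs (sumL f l) <= sumL (fun a => Rabs (f a)) l.
Proof. induction l; simpl. rewrite Rabs_R0; lra.
  eapply Rle_trans; [apply Rabs_triang|]. lra. Qed.
Lemma sumL_scal {A} c (f : A -> R) l : sumL (fun a => c * f a) l = c * sumL f l.
Proof. induction l; simpl; [ring | rewrite IHl; ring]. Qed.
Lemma sumL_zero {A} (l : list A) : sumL (fun _ => 0) l = 0.
Proof. induction l; simpl; [ring | rewrite IHl; ring]. Qed.
Lemma sumL_nonneg {A} (f : A -> R) l : (forall a, In a l -> 0 <= f a) -> 0 <= sumL f l.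
Proof. intros H. rewrite <- (sumL_zero l). apply sumL_le; auto. Qed.

Lemma RInt_sumL {A} (l : list A) (f : A -> R -> R) a b :
  (forall x, In x l -> ex_RInt (f x) a b) ->
  ex_RInt (fun s => sumL (fun x => f x s) l) a b /\
  RInt (fun s => sumL (fun x => f x s) l) a b = sumL (fun x => RInt (f x) a b) l.
Proof.
  induction l as [|z l IH]; simpl; intros H.
  - split. apply ex_RInt_const. rewrite RInt_const. unfold scal; simpl; unfold mult; simpl; ring.
  - destruct (IH (fun x hx => H x (or_intror hx))) as [H1 H2].
    pose proof (H z (or_introl eq_refl)) as H3.
    split.
    + apply (ex_RInt_plus (f z) (fun s => sumL (fun x => f x s) l)); auto.
    + rewrite <- H2. apply (RInt_plus (f z) (fun s => sumL (fun x => f x s) l)); auto.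
Qed.

Lemma exp_le_mono x y : x <= y -> exp x <= exp y.
Proof. intros [H|H]. left; apply exp_increasing; auto. subst; lra. Qed.

Definition tm (Q P c0 sx t : R) (tau : R) := exp (- Q * (t - tau)) * (c0 * exp (- P * tau)) * sx.

Lemma tm_bound Q P c0 sx t mu : 0 < t -> 0 <= mu -> mu <= Q -> mu <= P -> Rabs sx <= 1 ->
  ex_RInt (tm Q P c0 sx t) 0 t /\ Rabs (RInt (tm Q P c0 sx t) 0 t) <= t * (Rabs c0 * exp (- mu * t)).
Proof.
  intros Ht Hm HQ HP Hs.
  assert (He : ex_RInt (tm Q P c0 sx t) 0 t).
  { apply (@ex_RInt_continuous R_CompleteNormedModule). intros z _. apply (@ex_derive_continuous R_AbsRing R_NormedModule). unfold tm. auto_derive. auto. }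
  split; auto.
  replace (t * (Rabs c0 * exp (- mu * t))) with ((t - 0) * (Rabs c0 * exp (- mu * t))) by ring.
  apply abs_RInt_le_const; [lra|auto|].
  intros s Hs'. unfold tm.
  rewrite !Rabs_mult, (Rabs_pos_eq (exp _)), (Rabs_pos_eq (exp (- P * s))) by (left; apply exp_pos).
  assert (exp (- Q * (t - s)) * exp (- P * s) <= exp (- mu * t)).
  { rewrite <- exp_plus. apply exp_le_mono. nra. }
  pose proof (Rabs_pos c0). pose proof (Rabs_pos sx).
  pose proof (exp_pos (- Q * (t - s))). pose proof (exp_pos (- P * s)).
  assert (Rabs c0 * (exp (- Q * (t - s)) * exp (- P * s)) * Rabs sx <= Rabs c0 * exp (- mu * t) * 1).
  { apply Rmult_le_compat; [apply Rmult_le_pos; nra | lra | apply Rmult_le_compat_l; auto | auto]. }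
  nra.
Qed.

Lemma C1_eval p x : Defs.c1 (eval_sinpoly p x) = sumL (fun m => fst (fst m) * sin (dot (snd (fst m)) x) * Defs.c1 (snd m)) p.
Proof. induction p; simpl. reflexivity. rewrite <- IHp. reflexivity. Qed.
Lemma C2_eval p x : Defs.c2 (eval_sinpoly p x) = sumL (fun m => fst (fst m) * sin (dot (snd (fst m)) x) * Defs.c2 (snd m)) p.
Proof. induction p; simpl. reflexivity. rewrite <- IHp. reflexivity. Qed.
Lemma C3_eval p x : Defs.c3 (eval_sinpoly p x) = sumL (fun m => fst (fst m) * sin (dot (snd (fst m)) x) * Defs.c3 (snd m)) p.
Proof. induction p; simpl. reflexivity. rewrite <- IHp. reflexivity. Qed.

Section S.
Variables (r K : nat) (b1 b2 a2 th1 th2 : R).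

Definition P_ i j := npow (kk K i) (2 * a2) + npow (kk' K j) (2 * a2).
Definition c0_ i j := - (Rpower (INR r) (- b1 - b2) / 2) * npow (kk K i) th1 * npow (kk' K j) th2.

Definition h1 (x : vec3) (t : R) (i j : nat) (tau : R) :=
  if Nat.eqb i j then 0 else
  tm (npow (vsub (kk' K j) (kk K i)) (2 * a2)) (P_ i j) (c0_ i j) (sin (dot (vsub (kk' K j) (kk K i)) x)) t tau.
Definition h2 (x : vec3) (t : R) (i j : nat) (tau : R) :=
  tm (npow (vadd (kk' K j) (kk K i)) (2 * a2)) (P_ i j) (c0_ i j) (sin (dot (vadd (kk' K j) (kk K i)) x)) t tau.

Lemma b11_eq x t : b11 r K b1 b2 a2 th1 th2 x t =
  v3 (RInt (fun _ => 0) 0 t) (RInt (fun tau => sumL (fun i => sumL (fun j => h1 x t i j tau) (idx r)) (idx r)) 0 t) (RInt (fun _ => 0) 0 t).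
Proof.
  unfold b11, duhamel, RInt3. f_equal; apply RInt_ext; intros tau _;
    match goal with |- ?a = ?b => change (@eq R a b) end.
  - rewrite C1_eval. unfold frac_heat, Defs.E1. rewrite sumL_map, sumL_flat_map.
    rewrite <- (sumL_zero (idx r)). apply sumL_ext; intros i _.
    rewrite sumL_flat_map. rewrite <- (sumL_zero (idx r)). apply sumL_ext; intros j _.
    destruct (Nat.eqb i j); simpl; unfold vprime, v3, Defs.c1; simpl; ring.
  - rewrite C2_eval. unfold frac_heat, Defs.E1. rewrite sumL_map, sumL_flat_map.
    apply sumL_ext; intros i _.
    rewrite sumL_flat_map. apply sumL_ext; intros j _.
    unfold h1. destruct (Nat.eqb i j); simpl. reflexivity. unfold tm, coefE, P_, c0_, vprime, v3, Defs.c2; simpl; ring.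
  - rewrite C3_eval. unfold frac_heat, Defs.E1. rewrite sumL_map, sumL_flat_map.
    rewrite <- (sumL_zero (idx r)). apply sumL_ext; intros i _.
    rewrite sumL_flat_map. rewrite <- (sumL_zero (idx r)). apply sumL_ext; intros j _.
    destruct (Nat.eqb i j); simpl; unfold vprime, v3, Defs.c3; simpl; ring.
Qed.

Lemma b12_eq x t : b12 r K b1 b2 a2 th1 th2 x t =
  v3 (RInt (fun _ => 0) 0 t) (RInt (fun tau => sumL (fun i => sumL (fun j => h2 x t i j tau) (idx r)) (idx r)) 0 t) (RInt (fun _ => 0) 0 t).
Proof.
  unfold b12, duhamel, RInt3. f_equal; apply RInt_ext; intros tau _;
    match goal with |- ?a = ?b => change (@eq R a b) end.
  - rewrite C1_eval. unfold frac_heat, Defs.E2. rewrite sumL_map, sumL_flat_map.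
    rewrite <- (sumL_zero (idx r)). apply sumL_ext; intros i _.
    rewrite sumL_map. rewrite <- (sumL_zero (idx r)). apply sumL_ext; intros j _.
    simpl; unfold vprime, v3, Defs.c1, Defs.c3; simpl; ring.
  - rewrite C2_eval. unfold frac_heat, Defs.E2. rewrite sumL_map, sumL_flat_map.
    apply sumL_ext; intros i _.
    rewrite sumL_map. apply sumL_ext; intros j _.
    unfold h2. simpl. unfold tm, coefE, P_, c0_, vprime, v3, Defs.c2; simpl; ring.
  - rewrite C3_eval. unfold frac_heat, Defs.E2. rewrite sumL_map, sumL_flat_map.
    rewrite <- (sumL_zero (idx r)). apply sumL_ext; intros i _.
    rewrite sumL_map. rewrite <- (sumL_zero (idx r)). apply sumL_ext; intros j _.
    simpl; unfold vprime, v3, Defs.c1, Defs.c3; simpl; ring.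
Qed.
End S.

Lemma RInt0 a b : RInt (fun _ => 0) a b = 0.
Proof. rewrite RInt_const. unfold scal; simpl; unfold mult; simpl; ring. Qed.
Lemma norm3_mid y : norm3 (v3 0 y 0) = Rabs y.
Proof. unfold norm3, dot, v3, Defs.c1, Defs.c2, Defs.c3; simpl. rewrite <- sqrt_Rsqr_abs. unfold Rsqr. f_equal; ring. Qed.

Lemma Rpower_pos x y : 0 < Rpower x y.
Proof. unfold Rpower; apply exp_pos. Qed.

Lemma norm3_c1 q : Rabs (Defs.c1 q) <= norm3 q.
Proof. unfold norm3, dot. rewrite <- sqrt_Rsqr_abs. apply sqrt_le_1_alt. unfold Rsqr. nra. Qed.

Lemma npow_nonneg q s : 0 <= npow q s.
Proof. unfold npow. destruct (Req_EM_T (norm3 q) 0). lra. left; apply Rpower_pos. Qed.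

Lemma npow_lb q s L : 0 < L -> L <= norm3 q -> 0 <= s -> Rpower L s <= npow q s.
Proof. intros. unfold npow. destruct (Req_EM_T (norm3 q) 0). lra.
  apply Rle_Rpower_l; lra. Qed.

Lemma npow_ub q s U : 0 < norm3 q -> norm3 q <= U -> 0 <= s -> npow q s <= Rpower U s.
Proof. intros. unfold npow. destruct (Req_EM_T (norm3 q) 0). lra.
  apply Rle_Rpower_l; lra. Qed.

Definition uu (K i : nat) := 2 ^ (i - 1) * INR K.

Lemma uu_ge1 K i : (1 <= K)%nat -> 1 <= uu K i.
Proof. intros HK. unfold uu. pose proof (pow_R1_Rle 2 (i-1) ltac:(lra)).
  pose proof (le_INR _ _ HK). simpl in H0. nra. Qed.

Lemma norm_kk K i : (1 <= K)%nat -> norm3 (kk K i) = uu K i.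
Proof. intros HK. pose proof (uu_ge1 K i HK). unfold norm3, dot, kk, vscale, zeta, v3, Defs.c1, Defs.c2, Defs.c3; simpl.
  fold (uu K i). replace (uu K i * 1 * (uu K i * 1) + uu K i * 0 * (uu K i * 0) + uu K i * 0 * (uu K i * 0)) with (uu K i * uu K i) by ring.
  apply sqrt_square. lra. Qed.

Lemma norm_kk'_ub K j : (1 <= K)%nat -> norm3 (kk' K j) <= 2 * uu K j.
Proof. intros HK. pose proof (uu_ge1 K j HK). unfold norm3, dot, kk', kk, vadd, vscale, zeta, eta, v3, Defs.c1, Defs.c2, Defs.c3; simpl.
  fold (uu K j). rewrite <- (sqrt_square (2 * uu K j)) by lra. apply sqrt_le_1_alt. nra. Qed.

Lemma c1_kk' K j : Defs.c1 (kk' K j) = uu K j.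
Proof. unfold kk', kk, vadd, vscale, zeta, eta, v3, Defs.c1, Defs.c2, Defs.c3; simpl. fold (uu K j). ring. Qed.
Lemma c1_kk K j : Defs.c1 (kk K j) = uu K j.
Proof. unfold kk, vadd, vscale, zeta, eta, v3, Defs.c1, Defs.c2, Defs.c3; simpl. fold (uu K j). ring. Qed.
Lemma c1_vadd a b : Defs.c1 (vadd a b) = Defs.c1 a + Defs.c1 b.
Proof. reflexivity. Qed.
Lemma c1_vsub a b : Defs.c1 (vsub a b) = Defs.c1 a - Defs.c1 b.
Proof. reflexivity. Qed.

Lemma uu_sep K i j : (1 <= K)%nat -> (1 <= i)%nat -> (1 <= j)%nat -> i <> j ->
  uu K i / 2 <= Rabs (uu K j - uu K i) /\ uu K j / 2 <= Rabs (uu K j - uu K i).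
Proof.
  intros HK Hi Hj Hij. pose proof (le_INR _ _ HK). simpl in H.
  assert (forall a b, (1 <= a)%nat -> (a < b)%nat -> 2 * 2 ^ (a - 1) <= 2 ^ (b - 1)).
  { intros a b Ha Hb. replace (2 * 2 ^ (a - 1)) with (2 ^ (S (a - 1))) by (simpl; ring).
    apply Rle_pow; [lra | lia]. }
  pose proof (pow_R1_Rle 2 (i-1) ltac:(lra)). pose proof (pow_R1_Rle 2 (j-1) ltac:(lra)).
  unfold uu. destruct (Nat.lt_ge_cases i j).
  - pose proof (H0 i j Hi H3). rewrite Rabs_pos_eq by nra. split; nra.
  - assert (j < i)%nat by lia. pose proof (H0 j i Hj H4). rewrite Rabs_minus_sym, Rabs_pos_eq by nra. split; nra.
Qed.

Definition FF (a th t v : R) := Rpower (4 * v) th * exp (- Rpower v (2 * a) * t / 2).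

Lemma FF_nonneg a th t v : 0 <= FF a th t v.
Proof. unfold FF. pose proof (Rpower_pos (4*v) th). pose proof (exp_pos (- Rpower v (2 * a) * t / 2)). nra. Qed.

Lemma gen_bound (r K : nat) b1 b2 a2 th1 th2 i j Q sx t :
  0 < a2 -> 0 < th1 -> 0 < th2 -> (1 <= K)%nat -> 0 < t -> Rabs sx <= 1 ->
  Rpower (uu K i / 2) (2 * a2) <= Q -> Rpower (uu K j / 2) (2 * a2) <= Q ->
  ex_RInt (tm Q (P_ K a2 i j) (c0_ r K b1 b2 th1 th2 i j) sx t) 0 t /\
  Rabs (RInt (tm Q (P_ K a2 i j) (c0_ r K b1 b2 th1 th2 i j) sx t) 0 t)
   <= t * (Rpower (INR r) (- b1 - b2) / 2) * (FF a2 th1 t (uu K i / 2) * FF a2 th2 t (uu K j / 2)).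
Proof.
  intros Ha Ht1 Ht2 HK Ht Hs HQi HQj.
  pose proof (uu_ge1 K i HK) as Hui. pose proof (uu_ge1 K j HK) as Huj.
  set (vi := uu K i / 2) in *. set (vj := uu K j / 2) in *.
  set (mu := (Rpower vi (2 * a2) + Rpower vj (2 * a2)) / 2).
  pose proof (Rpower_pos vi (2*a2)). pose proof (Rpower_pos vj (2*a2)).
  assert (HP : mu <= P_ K a2 i j).
  { unfold P_, mu.
    assert (Rpower vi (2 * a2) <= npow (kk K i) (2 * a2)).
    { apply npow_lb; [unfold vi; lra | rewrite norm_kk by auto; unfold vi; lra | lra]. }
    assert (Rpower vj (2 * a2) <= npow (kk' K j) (2 * a2)).
    { apply npow_lb; [unfold vj; lra | | lra].
      eapply Rle_trans; [| apply norm3_c1]. rewrite c1_kk'. unfold vj. rewrite Rabs_pos_eq; lra. }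
    lra. }
  destruct (tm_bound Q (P_ K a2 i j) (c0_ r K b1 b2 th1 th2 i j) sx t mu Ht ltac:(unfold mu; lra)
     ltac:(unfold mu; lra) HP Hs) as [H1 H2].
  split; auto. eapply Rle_trans; [apply H2|].
  rewrite Rmult_assoc. apply Rmult_le_compat_l; [lra|].
  assert (Hc : Rabs (c0_ r K b1 b2 th1 th2 i j) <= Rpower (INR r) (- b1 - b2) / 2 * Rpower (4 * vi) th1 * Rpower (4 * vj) th2).
  { unfold c0_. pose proof (npow_nonneg (kk K i) th1). pose proof (npow_nonneg (kk' K j) th2).
    pose proof (Rpower_pos (INR r) (- b1 - b2)).
    rewrite Rabs_mult, Rabs_mult, Rabs_Ropp, !Rabs_pos_eq by lra.
    assert (npow (kk K i) th1 <= Rpower (4 * vi) th1).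
    { apply npow_ub; [rewrite norm_kk by auto; lra | rewrite norm_kk by auto; unfold vi; lra | lra]. }
    assert (npow (kk' K j) th2 <= Rpower (4 * vj) th2).
    { assert (uu K j <= norm3 (kk' K j)).
      { eapply Rle_trans; [| apply norm3_c1]. rewrite c1_kk'. rewrite Rabs_pos_eq; lra. }
      apply npow_ub; [lra | pose proof (norm_kk'_ub K j HK); unfold vj; lra | lra]. }
    apply Rmult_le_compat; try nra. }
  assert (He : exp (- mu * t) = exp (- Rpower vi (2 * a2) * t / 2) * exp (- Rpower vj (2 * a2) * t / 2)).
  { rewrite <- exp_plus. f_equal. unfold mu. field. }
  rewrite He. unfold FF. fold vi vj.
  pose proof (exp_pos (- Rpower vi (2 * a2) * t / 2)). pose proof (exp_pos (- Rpower vj (2 * a2) * t / 2)).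
  pose proof (Rabs_pos (c0_ r K b1 b2 th1 th2 i j)).
  pose proof (Rpower_pos (4 * vi) th1). pose proof (Rpower_pos (4 * vj) th2).
  pose proof (Rpower_pos (INR r) (- b1 - b2)).
  set (e1 := exp (- Rpower vi (2 * a2) * t / 2)) in *. set (e2 := exp (- Rpower vj (2 * a2) * t / 2)) in *.
  set (A := Rpower (4 * vi) th1) in *. set (B := Rpower (4 * vj) th2) in *.
  set (Rp := Rpower (INR r) (- b1 - b2)) in *.
  replace (Rp / 2 * (A * e1 * (B * e2))) with ((Rp / 2 * A * B) * (e1 * e2)) by ring.
  apply Rmult_le_compat_r; nra.
Qed.

Lemma h2_bound (r K : nat) b1 b2 a2 th1 th2 x t i j :
  0 < a2 -> 0 < th1 -> 0 < th2 -> (1 <= K)%nat -> (1 <= i)%nat -> (1 <= j)%nat -> 0 < t ->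
  ex_RInt (h2 r K b1 b2 a2 th1 th2 x t i j) 0 t /\
  Rabs (RInt (h2 r K b1 b2 a2 th1 th2 x t i j) 0 t)
   <= t * (Rpower (INR r) (- b1 - b2) / 2) * (FF a2 th1 t (uu K i / 2) * FF a2 th2 t (uu K j / 2)).
Proof.
  intros Ha Ht1 Ht2 HK Hi Hj Ht. unfold h2.
  pose proof (uu_ge1 K i HK) as Hui. pose proof (uu_ge1 K j HK) as Huj.
  assert (Hn : uu K i + uu K j <= norm3 (vadd (kk' K j) (kk K i))).
  { eapply Rle_trans; [| apply norm3_c1]. rewrite c1_vadd, c1_kk', c1_kk, Rabs_pos_eq; lra. }
  apply gen_bound; auto.
  - apply Rabs_le; pose proof (SIN_bound (dot (vadd (kk' K j) (kk K i)) x)); lra.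
  - apply npow_lb; lra.
  - apply npow_lb; lra.
Qed.

Lemma h1_bound (r K : nat) b1 b2 a2 th1 th2 x t i j :
  0 < a2 -> 0 < th1 -> 0 < th2 -> (1 <= K)%nat -> (1 <= i)%nat -> (1 <= j)%nat -> 0 < t ->
  ex_RInt (h1 r K b1 b2 a2 th1 th2 x t i j) 0 t /\
  Rabs (RInt (h1 r K b1 b2 a2 th1 th2 x t i j) 0 t)
   <= t * (Rpower (INR r) (- b1 - b2) / 2) * (FF a2 th1 t (uu K i / 2) * FF a2 th2 t (uu K j / 2)).
Proof.
  intros Ha Ht1 Ht2 HK Hi Hj Ht. unfold h1.
  destruct (Nat.eqb_spec i j) as [Hij|Hij].
  - split. apply ex_RInt_const. rewrite RInt0, Rabs_R0.
    pose proof (FF_nonneg a2 th1 t (uu K i / 2)). pose proof (FF_nonneg a2 th2 t (uu K j / 2)).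
    pose proof (Rpower_pos (INR r) (- b1 - b2)). apply Rmult_le_pos; [|nra]. nra.
  - pose proof (uu_ge1 K i HK) as Hui. pose proof (uu_ge1 K j HK) as Huj.
    destruct (uu_sep K i j HK Hi Hj Hij) as [S1 S2].
    assert (Hn : Rabs (uu K j - uu K i) <= norm3 (vsub (kk' K j) (kk K i))).
    { eapply Rle_trans; [| apply norm3_c1]. rewrite c1_vsub, c1_kk', c1_kk; lra. }
    apply gen_bound; auto.
    + apply Rabs_le; pose proof (SIN_bound (dot (vsub (kk' K j) (kk K i)) x)); lra.
    + apply npow_lb; lra.
    + apply npow_lb; lra.
Qed.

Definition gg (a th s : R) := Rpower s th * exp (- Rpower s (2 * a) / 2).
Definition Phi (th s : R) := Rpower s th / (1 + Rpower s th).

Lemma Rpower_exp w p : Rpower (exp w) p = exp (p * w).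
Proof. unfold Rpower. rewrite ln_exp. reflexivity. Qed.

Lemma poly_exp_bound a th : 0 < a -> 0 < th -> exists D, 0 < D /\
  forall s, 0 < s -> Rpower s th * Rpower s th * exp (- Rpower s (2 * a) / 2) <= D.
Proof.
  intros Ha Ht. set (p := th / a). set (c := Rpower (/ (2 * p)) p).
  assert (Hp : 0 < p) by (unfold p; apply Rdiv_lt_0_compat; lra).
  assert (Hc : 0 < c) by apply Rpower_pos.
  exists (/ c). split. apply Rinv_0_lt_compat; auto.
  intros s Hs. set (y := Rpower s (2 * a) / 2).
  assert (Hy : 0 < y) by (unfold y; pose proof (Rpower_pos s (2*a)); lra).
  assert (H1 : Rpower (y / p) p <= exp y).
  { replace (exp y) with (Rpower (exp (y / p)) p) by (rewrite Rpower_exp; f_equal; field; lra).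
    apply Rle_Rpower_l; [lra|]. split. apply Rdiv_lt_0_compat; lra.
    pose proof (exp_ineq1_le (y / p)). lra. }
  assert (H2 : Rpower (y / p) p = Rpower s th * Rpower s th * c).
  { unfold c. replace (y / p) with (Rpower s (2 * a) * / (2 * p)) by (unfold y; field; lra).
    rewrite <- Rpower_mult_distr by (try apply Rpower_pos; apply Rinv_0_lt_compat; lra).
    rewrite Rpower_mult, <- Rpower_plus. f_equal. f_equal. unfold p. field. lra. }
  rewrite H2 in H1. pose proof (exp_pos y).
  assert (exp (- y) = / exp y) by apply exp_Ropp.
  replace (- Rpower s (2 * a) / 2) with (- y) by (unfold y; field).
  rewrite H0. apply (Rmult_le_reg_r c); auto. rewrite Rinv_l by lra.
  replace (Rpower s th * Rpower s th * / exp y * c) with ((Rpower s th * Rpower s th * c) * / exp y) by ring.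
  apply (Rmult_le_reg_r (exp y)); auto. rewrite Rmult_assoc, Rinv_l by lra. lra.
Qed.

Lemma gg_tele a th : 0 < a -> 0 < th -> exists C0, 0 < C0 /\
  forall s, 0 < s -> gg a th s <= C0 * (Phi th (2 * s) - Phi th s).
Proof.
  intros Ha Ht. destruct (poly_exp_bound a th Ha Ht) as [D [HD HDb]].
  set (rho := Rpower 2 th).
  assert (Hrho : 1 < rho). { unfold rho. rewrite <- (Rpower_O 2) by lra. apply Rpower_lt; lra. }
  exists (2 * rho * (1 + D) / (rho - 1)). split. apply Rdiv_lt_0_compat; nra.
  intros s Hs. unfold gg, Phi.
  rewrite <- Rpower_mult_distr by lra. fold rho.
  set (z := Rpower s th). set (E := exp (- Rpower s (2 * a) / 2)).
  pose proof (HDb s Hs) as HB. fold z E in HB.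
  assert (Hz : 0 < z) by apply Rpower_pos.
  assert (HE : 0 < E) by apply exp_pos.
  assert (HE1 : E <= 1).
  { unfold E. rewrite <- exp_0. apply exp_le_mono. pose proof (Rpower_pos s (2*a)). lra. }
  assert (Hkey : z * E * ((1 + rho * z) * (1 + z)) <= 2 * rho * (1 + D) * z).
  { assert (E * ((1 + rho * z) * (1 + z)) <= 2 * rho * (1 + D)).
    { assert ((1 + rho * z) * (1 + z) <= 2 * rho * (1 + z * z)).
      { assert (0 <= rho * ((z - 1) * (z - 1))) by (apply Rmult_le_pos; [lra | apply Rle_0_sqr]).
        assert (0 <= (rho - 1) * (1 + z)) by nra. nra. }
      nra. }
    nra. }
  replace (2 * rho * (1 + D) / (rho - 1) * (rho * z / (1 + rho * z) - z / (1 + z)))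
    with (2 * rho * (1 + D) * z * / ((1 + rho * z) * (1 + z))) by (field; nra).
  assert (Hq : 0 < (1 + rho * z) * (1 + z)) by nra.
  apply (Rmult_le_reg_r ((1 + rho * z) * (1 + z))); auto.
  rewrite (Rmult_assoc (2 * rho * (1 + D) * z)), Rinv_l by lra. lra.
Qed.

Lemma Phi_bounds th s : 0 <= Phi th s <= 1.
Proof. unfold Phi. pose proof (Rpower_pos s th). split.
  apply Rmult_le_pos; [lra | left; apply Rinv_0_lt_compat; lra].
  apply (Rmult_le_reg_r (1 + Rpower s th)); [lra|]. unfold Rdiv. rewrite Rmult_assoc, Rinv_l; lra. Qed.

Lemma tele_sum a th C0 s1 : 0 < s1 -> 0 <= C0 ->
  (forall s, 0 < s -> gg a th s <= C0 * (Phi th (2 * s) - Phi th s)) ->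
  forall n, sumL (fun i => gg a th (2 ^ (i - 1) * s1)) (seq 1 n) <= C0 * (Phi th (2 ^ n * s1) - Phi th s1).
Proof.
  intros Hs HC H. induction n.
  - simpl. rewrite Rmult_1_l. lra.
  - rewrite seq_S, sumL_app. simpl. replace (S n - 1)%nat with n by lia.
    pose proof (H (2 ^ n * s1) ltac:(pose proof (pow_lt 2 n ltac:(lra)); nra)).
    replace (2 * 2 ^ n * s1) with (2 * (2 ^ n * s1)) by ring. rewrite Nat.sub_0_r. lra.
Qed.

Lemma dyadic a th : 0 < a -> 0 < th -> exists C, 0 < C /\
  forall (t : R) (K r : nat), 0 < t -> (1 <= K)%nat ->
  sumL (fun i => FF a th t (uu K i / 2)) (idx r) <= C * Rpower t (- (th / (2 * a))).
Proof.
  intros Ha Ht. destruct (gg_tele a th Ha Ht) as [C0 [HC0 HT]].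
  exists (Rpower 4 th * C0). split. pose proof (Rpower_pos 4 th); nra.
  intros t K r Htp HK.
  set (lam := Rpower t (/ (2 * a))).
  assert (Hlam : 0 < lam) by apply Rpower_pos.
  pose proof (le_INR _ _ HK) as HK'. simpl in HK'.
  set (s1 := INR K / 2 * lam).
  assert (Hs1 : 0 < s1) by (unfold s1; nra).
  assert (Heq : forall i, FF a th t (uu K i / 2) = Rpower 4 th * Rpower t (- (th / (2 * a))) * gg a th (2 ^ (i - 1) * s1)).
  { intros i. unfold FF, gg. set (v := uu K i / 2).
    assert (Hv : 0 < v) by (unfold v; pose proof (uu_ge1 K i HK); lra).
    replace (2 ^ (i - 1) * s1) with (v * lam) by (unfold v, s1, uu; field).
    rewrite <- (Rpower_mult_distr 4 v th) by lra.
    rewrite <- (Rpower_mult_distr v lam) by lra.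
    rewrite <- (Rpower_mult_distr v lam) by lra.
    unfold lam. rewrite !Rpower_mult.
    replace (/ (2 * a) * (2 * a)) with 1 by (field; lra). rewrite Rpower_1 by lra.
    replace (- (Rpower v (2 * a) * t) / 2) with (- Rpower v (2 * a) * t / 2) by field.
    replace (Rpower v th) with (Rpower v th * (Rpower t (- (th / (2 * a))) * Rpower t (/ (2 * a) * th))) at 1.
    ring.
    rewrite <- Rpower_plus. replace (- (th / (2 * a)) + / (2 * a) * th) with 0 by (field; lra).
    rewrite Rpower_O by lra. ring. }
  unfold idx. rewrite (sumL_ext _ _ _ (fun i _ => Heq i)).
  rewrite sumL_scal.
  pose proof (tele_sum a th C0 s1 Hs1 ltac:(lra) HT r).
  pose proof (Phi_bounds th (2 ^ r * s1)). pose proof (Phi_bounds th s1).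
  pose proof (Rpower_pos 4 th). pose proof (Rpower_pos t (- (th / (2 * a)))).
  assert (sumL (fun i => gg a th (2 ^ (i - 1) * s1)) (seq 1 r) <= C0) by nra.
  replace (Rpower 4 th * C0 * Rpower t (- (th / (2 * a)))) with (Rpower 4 th * Rpower t (- (th / (2 * a))) * C0) by ring.
  apply Rmult_le_compat_l; nra.
Qed.

Lemma double_bound (h : nat -> nat -> R -> R) (l : list nat) t c (X Y : nat -> R) :
  (forall i j, In i l -> In j l -> ex_RInt (h i j) 0 t /\ Rabs (RInt (h i j) 0 t) <= c * (X i * Y j)) ->
  Rabs (RInt (fun tau => sumL (fun i => sumL (fun j => h i j tau) l) l) 0 t) <= c * (sumL X l * sumL Y l).
Proof.
  intros H.
  assert (Hin : forall i, In i l -> ex_RInt (fun tau => sumL (fun j => h i j tau) l) 0 t /\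
     RInt (fun tau => sumL (fun j => h i j tau) l) 0 t = sumL (fun j => RInt (h i j) 0 t) l).
  { intros i Hi. apply (RInt_sumL l (h i)). intros j Hj. apply (H i j Hi Hj). }
  destruct (RInt_sumL l (fun i tau => sumL (fun j => h i j tau) l) 0 t) as [_ E1].
  { intros i Hi. apply (Hin i Hi). }
  rewrite E1. eapply Rle_trans; [apply sumL_abs|].
  rewrite (sumL_ext _ (fun i => Rabs (sumL (fun j => RInt (h i j) 0 t) l))) by (intros i Hi; rewrite (proj2 (Hin i Hi)); reflexivity).
  eapply Rle_trans. apply sumL_le. intros i Hi. eapply Rle_trans; [apply sumL_abs|].
  apply sumL_le. intros j Hj. apply (proj2 (H i j Hi Hj)).
  rewrite (sumL_ext _ (fun i => (c * X i) * sumL Y l)).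
  - rewrite (sumL_ext _ (fun i => (c * sumL Y l) * X i)) by (intros; ring).
    rewrite sumL_scal. right; ring.
  - intros i _. rewrite <- sumL_scal. apply sumL_ext; intros; ring.
Qed.

Theorem lemma4p5 :
  forall (b1 b2 a2 th1 th2 : R),
    0 < b1 -> 0 < b2 -> 0 < a2 -> 0 < th1 -> 0 < th2 ->
    exists C : R, 0 < C /\
      forall (r K : nat) (t : R), (1 <= r)%nat -> (1 <= K)%nat -> 0 < t ->
        forall x y : vec3,
          norm3 (b11 r K b1 b2 a2 th1 th2 x t) + norm3 (b12 r K b1 b2 a2 th1 th2 y t)
          <= C * Rpower (INR r) (- b1 - b2) * Rpower t (1 - (th1 + th2) / (2 * a2)).
Proof.
  intros b1 b2 a2 th1 th2 Hb1 Hb2 Ha Ht1 Ht2.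
  destruct (dyadic a2 th1 Ha Ht1) as [C1 [HC1 HD1]].
  destruct (dyadic a2 th2 Ha Ht2) as [C2 [HC2 HD2]].
  exists (C1 * C2). split. nra.
  intros r K t Hr HK Ht x y.
  rewrite b11_eq, b12_eq, !RInt0, !norm3_mid.
  set (Rp := Rpower (INR r) (- b1 - b2)).
  assert (HRp : 0 < Rp) by apply Rpower_pos.
  set (X := fun i => FF a2 th1 t (uu K i / 2)). set (Y := fun j => FF a2 th2 t (uu K j / 2)).
  assert (B1 : Rabs (RInt (fun tau => sumL (fun i => sumL (fun j => h1 r K b1 b2 a2 th1 th2 x t i j tau) (idx r)) (idx r)) 0 t)
     <= t * (Rp / 2) * (sumL X (idx r) * sumL Y (idx r))).
  { apply double_bound. intros i j Hi Hj. unfold idx in Hi, Hj. apply in_seq in Hi, Hj.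
    apply h1_bound; auto; lia. }
  assert (B2 : Rabs (RInt (fun tau => sumL (fun i => sumL (fun j => h2 r K b1 b2 a2 th1 th2 y t i j tau) (idx r)) (idx r)) 0 t)
     <= t * (Rp / 2) * (sumL X (idx r) * sumL Y (idx r))).
  { apply double_bound. intros i j Hi Hj. unfold idx in Hi, Hj. apply in_seq in Hi, Hj.
    apply h2_bound; auto; lia. }
  pose proof (HD1 t K r Ht HK) as S1. pose proof (HD2 t K r Ht HK) as S2.
  fold X in S1. fold Y in S2.
  assert (N1 : 0 <= sumL X (idx r)) by (apply sumL_nonneg; intros; apply FF_nonneg).
  assert (N2 : 0 <= sumL Y (idx r)) by (apply sumL_nonneg; intros; apply FF_nonneg).
  set (T1 := Rpower t (- (th1 / (2 * a2)))) in *. set (T2 := Rpower t (- (th2 / (2 * a2)))) in *.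
  assert (HT : Rpower t (1 - (th1 + th2) / (2 * a2)) = t * T1 * T2).
  { unfold T1, T2. rewrite <- (Rpower_1 t) at 2 by lra. rewrite <- !Rpower_plus. f_equal. field. lra. }
  rewrite HT.
  assert (sumL X (idx r) * sumL Y (idx r) <= (C1 * T1) * (C2 * T2)) by (apply Rmult_le_compat; auto).
  assert (t * (Rp / 2) * (sumL X (idx r) * sumL Y (idx r)) <= t * (Rp / 2) * ((C1 * T1) * (C2 * T2))).
  { apply Rmult_le_compat_l; [nra | auto]. }
  replace (C1 * C2 * Rp * (t * T1 * T2)) with (2 * (t * (Rp / 2) * ((C1 * T1) * (C2 * T2)))) by field.
  lra.
Qed.
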